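(* Let $(M,d)$ be a bounded metric space with metric normal structure such that $\mathcal A(M)$ is compact. Let $(T_i)_{i\in I}$ be a family of orbit-nonexpansive self-mappings of $M$ which commute pairwise ($T_i\circ T_j=T_j\circ T_i$ for all $i,j\in I$). Then there is $x\in M$ with $T_ix=x$ for all $i\in I$, and the set of common fixed points of the family is a one-local retract of $M$.
   Context: For a metric space $(M,d)$, a mapping $T:M\to M$ and $x\in M$, the orbit of $x$ is $o_T(x)=\{x\}\cup\{T^nx:n\in\mathbb N\}$. For $x\in M$ and bounded $A\subseteq M$, $D(x,A)=\sup\{d(x,a):a\in A\}$ and $\delta(A)=\sup\{d(x,y):x,y\in A\}$. A mapping $T:M\to M$ is orbit-nonexpansive if $d(Tx,Ty)\le D(x,o_T(y))$ for all $x,y\in M$. A subset of $M$ is admissible if it is an intersection of closed balls of $M$; $\mathcal A(M)$ denotes the family of admissible sets. $\mathcal A(M)$ is compact if every subfamily of $\mathcal A(M)$ all of whose finite intersections are nonempty has nonempty intersection. $(M,d)$ has metric normal structure if for every admissible set $A$ with more than one point there exists $z_A\in A$ with $D(z_A,A)<\delta(A)$. A subset $E\subseteq M$ is a one-local retract of $M$ if for every family of closed balls with centers in $E$ having nonempty intersection, that intersection meets $E$. *)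

(* Defs.v *)
From Stdlib Require Import Reals List.
From Coquelicot Require Import Coquelicot.
Open Scope R_scope.

Definition is_metric {M : Type} (d : M -> M -> R) : Prop :=
  (forall x y, 0 <= d x y) /\
  (forall x y, d x y = 0 <-> x = y) /\
  (forall x y, d x y = d y x) /\
  (forall x y z, d x z <= d x y + d y z).

Definition bounded_metric {M : Type} (d : M -> M -> R) : Prop :=
  exists B : R, forall x y, d x y <= B.

Definition Dist {M : Type} (d : M -> M -> R) (x : M) (A : M -> Prop) : Rbar :=
  Lub_Rbar (fun r => exists a, A a /\ r = d x a).

Definition diam {M : Type} (d : M -> M -> R) (A : M -> Prop) : Rbar :=
  Lub_Rbar (fun r => exists x y, A x /\ A y /\ r = d x y).

Definition orbit {M : Type} (T : M -> M) (x : M) : M -> Prop :=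
  fun y => y = x \/ exists n : nat, y = Nat.iter n T x.

Definition orbit_nonexpansive {M : Type} (d : M -> M -> R) (T : M -> M) : Prop :=
  forall x y, Rbar_le (Finite (d (T x) (T y))) (Dist d x (orbit T y)).

Definition cball {M : Type} (d : M -> M -> R) (c : M) (r : R) : M -> Prop :=
  fun y => d c y <= r.

Definition ball_family {M : Type} (F : M -> R -> Prop) : Prop :=
  forall c r, F c r -> 0 <= r.

Definition inter_balls {M : Type} (d : M -> M -> R) (F : M -> R -> Prop) : M -> Prop :=
  fun x => forall c r, F c r -> cball d c r x.

Definition admissible {M : Type} (d : M -> M -> R) (A : M -> Prop) : Prop :=
  exists F : M -> R -> Prop, ball_family F /\
    forall x, A x <-> inter_balls d F x.

Definition admissible_compact {M : Type} (d : M -> M -> R) : Prop :=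
  forall Fam : (M -> Prop) -> Prop,
    (forall A, Fam A -> admissible d A) ->
    (forall l : list (M -> Prop), (forall A, In A l -> Fam A) ->
        exists x, forall A, In A l -> A x) ->
    exists x, forall A, Fam A -> A x.

Definition has_more_than_one_point {M : Type} (A : M -> Prop) : Prop :=
  exists x y, A x /\ A y /\ x <> y.

Definition metric_normal_structure {M : Type} (d : M -> M -> R) : Prop :=
  forall A, admissible d A -> has_more_than_one_point A ->
    exists z, A z /\ Rbar_lt (Dist d z A) (diam d A).

Definition one_local_retract {M : Type} (d : M -> M -> R) (E : M -> Prop) : Prop :=
  forall F : M -> R -> Prop, ball_family F ->
    (forall c r, F c r -> E c) ->
    (exists x, inter_balls d F x) ->
    exists e, E e /\ inter_balls d F e.

(* Main.v *)
Require Import Defs.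
From Stdlib Require Import Reals List.
From Coquelicot Require Import Coquelicot.
Open Scope R_scope.
From Stdlib Require Import Lra Classical.

Definition subs {M : Type} (A B : M -> Prop) := forall x, A x -> B x.
Definition cov {M : Type} (d : M -> M -> R) (A : M -> Prop) : M -> Prop :=
  inter_balls d (fun c r => 0 <= r /\ forall a, A a -> d c a <= r).
Definition closedc {M : Type} (d : M -> M -> R) (A : M -> Prop) :=
  forall x, cov d A x -> A x.
Definition hullf {M : Type} (d : M -> M -> R) (E S : M -> Prop) : M -> R -> Prop :=
  fun c r => E c /\ 0 <= r /\ forall s, S s -> d c s <= r.
Definition funion {M : Type} (G H : M -> R -> Prop) : M -> R -> Prop :=
  fun c r => G c r \/ H c r.
Definition Ret {M : Type} (d : M -> M -> R) (A0 E : M -> Prop) :=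
  subs E A0 /\ forall G, ball_family G -> (forall c r, G c r -> E c) ->
    (exists x, A0 x /\ inter_balls d G x) -> exists e, E e /\ inter_balls d G e.

Lemma funion_iff {M : Type} d (G H : M -> R -> Prop) y :
  inter_balls d (funion G H) y <-> inter_balls d G y /\ inter_balls d H y.
Proof.
  unfold inter_balls, funion; split.
  - intros Hy; split; intros; apply Hy; auto.
  - intros [H1 H2] c r [h|h]; auto.
Qed.

Lemma funion_bf {M : Type} (G H : M -> R -> Prop) :
  ball_family G -> ball_family H -> ball_family (funion G H).
Proof. unfold ball_family, funion; intros h1 h2 c r [h|h]; eauto. Qed.

Lemma hullf_bf {M : Type} d (E S : M -> Prop) : ball_family (hullf d E S).
Proof. intros c r [_ [h _]]; exact h. Qed.

Lemma in_hull {M : Type} d (E S : M -> Prop) y : S y -> inter_balls d (hullf d E S) y.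
Proof. intros Sy c r [_ [_ h]]; apply h; auto. Qed.

Lemma hull_sub {M : Type} d (E S : M -> Prop) H :
  ball_family H -> (forall c r, H c r -> E c) ->
  (forall y, S y -> inter_balls d H y) ->
  forall y, inter_balls d (hullf d E S) y -> inter_balls d H y.
Proof.
  intros bf cH SH y Hy c r Hcr. apply Hy. split; [eauto|split; [eauto|]].
  intros s Ss. apply (SH s Ss c r Hcr).
Qed.

Lemma cov_mono {M : Type} d (A B : M -> Prop) : subs A B -> subs (cov d A) (cov d B).
Proof. intros AB x Hx c r [h1 h2]. apply Hx. split; auto. Qed.

Lemma closedc_balls {M : Type} d (G : M -> R -> Prop) :
  ball_family G -> closedc d (inter_balls d G).
Proof.
  intros bf x Hx c r Hcr. apply Hx. split; eauto.
  intros a Ha. apply Ha; auto.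
Qed.

Lemma closedc_inter {M : Type} d (A B : M -> Prop) :
  closedc d A -> closedc d B -> closedc d (fun x => A x /\ B x).
Proof.
  intros hA hB x Hx. split.
  - apply hA. apply (cov_mono d (fun x => A x /\ B x)); auto. intros y [h _]; auto.
  - apply hB. apply (cov_mono d (fun x => A x /\ B x)); auto. intros y [_ h]; auto.
Qed.

Lemma closedc_big {M : Type} d (C : (M -> Prop) -> Prop) :
  (forall A, C A -> closedc d A) -> closedc d (fun x => forall A, C A -> A x).
Proof.
  intros hC x Hx A CA. apply (hC A CA). apply (cov_mono d (fun x => forall A, C A -> A x)).
  - intros y h; apply h; auto.
  - exact Hx.
Qed.

Lemma closedc_adm {M : Type} d (A : M -> Prop) : closedc d A -> admissible d A.
Proof.
  intros h. exists (fun c r => 0 <= r /\ forall a, A a -> d c a <= r). split.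
  - intros c r [h1 _]; auto.
  - intros x; split.
    + intros Ax c r [_ h2]; exact (h2 x Ax).
    + intros Hx; exact (h x Hx).
Qed.

Lemma adm_closedc {M : Type} d (A : M -> Prop) : admissible d A -> closedc d A.
Proof.
  intros [F [bf HF]] x Hx. apply HF. intros c r Hcr. apply Hx. split; eauto.
  intros a Ha. apply HF in Ha. apply Ha; auto.
Qed.

Lemma Ret_nonempty {M : Type} d (A0 E : M -> Prop) :
  Ret d A0 E -> (exists x, A0 x) -> exists e, E e.
Proof.
  intros [_ hR] [x Ax].
  destruct (hR (fun _ _ => False)) as [e [Ee _]].
  - intros c r [].
  - intros c r [].
  - exists x; split; auto. intros c r [].
  - eauto.
Qed.

Definition chain {M : Type} (C : (M -> Prop) -> Prop) :=
  forall A B, C A -> C B -> subs A B \/ subs B A.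

Lemma chain_lb {M : Type} (C : (M -> Prop) -> Prop) (f : (M -> Prop) -> (M -> Prop)) :
  (exists A, C A) -> chain C ->
  forall l : list (M -> Prop), (forall X, In X l -> exists S, C S /\ X = f S) ->
  exists S0, C S0 /\ forall X, In X l -> exists S, C S /\ X = f S /\ subs S0 S.
Proof.
  intros [A CA] hc l. induction l as [|X l IH]; intros Hl.
  - exists A; split; auto. intros X [].
  - destruct IH as [S0 [CS0 H0]]. { intros Y HY; apply Hl; right; auto. }
    destruct (Hl X (or_introl eq_refl)) as [S1 [CS1 ->]].
    destruct (hc S0 S1 CS0 CS1) as [h|h].
    + exists S0; split; auto. intros Y [<-|HY]; eauto.
    + exists S1; split; auto. intros Y [<-|HY].
      * exists S1; split; auto; split; auto; intros z hz; auto.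
      * destruct (H0 Y HY) as [S [CS [-> hS]]]. exists S; split; auto; split; auto.
        intros z hz; apply hS, h; auto.
Qed.

Lemma compact_chain {M : Type} (d : M -> M -> R) (C : (M -> Prop) -> Prop) (f : (M -> Prop) -> (M -> Prop)) :
  admissible_compact d -> (exists A, C A) -> chain C ->
  (forall S, C S -> closedc d (f S)) ->
  (forall S0, C S0 -> exists p, forall S, C S -> subs S0 S -> f S p) ->
  exists q, forall S, C S -> f S q.
Proof.
  intros hK hne hc hcl hp.
  destruct (hK (fun X => exists S, C S /\ X = f S)) as [q Hq].
  - intros X [S [CS ->]]. apply closedc_adm; auto.
  - intros l Hl. destruct (chain_lb C f hne hc l Hl) as [S0 [CS0 H0]].
    destruct (hp S0 CS0) as [p Hp]. exists p. intros X HX.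
    destruct (H0 X HX) as [S [CS [-> hS]]]. apply Hp; auto.
  - exists q. intros S CS. apply Hq. eauto.
Qed.

Lemma orbit_inv {M : Type} (T : M -> M) (S : M -> Prop) :
  (forall y, S y -> S (T y)) -> forall y z, S y -> orbit T y z -> S z.
Proof.
  intros hT y z Sy [->|[n ->]]; auto.
  induction n; simpl; auto.
Qed.

Lemma orbit_fix {M : Type} (T : M -> M) c z : T c = c -> orbit T c z -> z = c.
Proof.
  intros hc [->|[n ->]]; auto. induction n; simpl; auto. rewrite IHn; auto.
Qed.

Lemma on_le {M : Type} (d : M -> M -> R) (T : M -> M) : orbit_nonexpansive d T ->
  forall x y r, (forall z, orbit T y z -> d x z <= r) -> d (T x) (T y) <= r.
Proof.
  intros H x y r Hr. specialize (H x y). unfold Dist in H.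
  destruct (Lub_Rbar_correct (fun r0 => exists a, orbit T y a /\ r0 = d x a)) as [Hub Hlub].
  assert (h : Rbar_le (Lub_Rbar (fun r0 => exists a, orbit T y a /\ r0 = d x a)) (Finite r)).
  { apply Hlub. intros w [a [Ha ->]]. simpl. apply Hr; auto. }
  exact (Rbar_le_trans _ _ _ H h).
Qed.

Lemma ns_get {M : Type} (d : M -> M -> R) : is_metric d -> metric_normal_structure d ->
  forall W, closedc d W -> (exists x y, W x /\ W y /\ x <> y) ->
  exists z r, W z /\ (forall y, W y -> d z y <= r) /\ exists x y, W x /\ W y /\ r < d x y.
Proof.
  intros [dpos [dzero [dsym dtri]]] Hn W HW H2.
  destruct (Hn W (closedc_adm d W HW) H2) as [z [Wz Hlt]].
  unfold Dist in Hlt.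
  destruct (Lub_Rbar_correct (fun r0 => exists a, W a /\ r0 = d z a)) as [Hub _].
  revert Hlt Hub. generalize (Lub_Rbar (fun r0 => exists a, W a /\ r0 = d z a)).
  intros l Hlt Hub. destruct l as [r| |].
  - exists z, r. split; auto. split.
    + intros y Wy. apply (Hub (d z y)). eauto.
    + apply NNPP; intro Hno. unfold diam in Hlt.
      destruct (Lub_Rbar_correct (fun r0 => exists x y, W x /\ W y /\ r0 = d x y)) as [_ Hl2].
      assert (h : Rbar_le (Lub_Rbar (fun r0 => exists x y, W x /\ W y /\ r0 = d x y)) (Finite r)).
      { apply Hl2. intros w [x [y [Wx [Wy ->]]]]. simpl. apply Rnot_lt_le. intro hl.
        apply Hno. exists x, y; auto. }
      exact (Rbar_lt_not_le _ _ Hlt h).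
  - exfalso. revert Hlt. generalize (diam d W). intros [| |]; simpl; tauto.
  - exfalso. specialize (Hub (d z z) (ex_intro _ z (conj Wz eq_refl))). simpl in Hub. exact Hub.
Qed.

From mathcomp Require classical_sets boolp.

Module ZornW.
From mathcomp Require Import ssreflect ssrbool boolp classical_sets.
Lemma zorn_min {M : Type} (P : (M -> Prop) -> Prop) (X0 : M -> Prop) :
  P X0 ->
  (forall C : (M -> Prop) -> Prop, (forall A, C A -> P A) -> (exists A, C A) ->
     (forall A B, C A -> C B -> (forall x, A x -> B x) \/ (forall x, B x -> A x)) ->
     P (fun x => forall A, C A -> A x)) ->
  exists X, P X /\ forall Y, P Y -> (forall x, Y x -> X x) -> forall x, X x -> Y x.
Proof.
move=> PX0 Hch.
pose T := {A : M -> Prop | P A}.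
pose R (a b : T) := asbool (forall x, proj1_sig b x -> proj1_sig a x).
have := @ZL_preorder T (exist _ X0 PX0) R.
case.
- by move=> t; apply/asboolP.
- move=> r s t /asboolP H1 /asboolP H2; apply/asboolP => x /H2 /H1 //.
- move=> A totA.
  case: (pselect (exists s, A s)) => [[s0 As0]|nA].
  + pose C := fun X => exists s, A s /\ proj1_sig s = X.
    have PC : P (fun x => forall X, C X -> X x).
      apply: Hch.
      * by move=> X [s [_ <-]]; exact: (proj2_sig s).
      * by exists (proj1_sig s0); exists s0.
      * move=> X Y [s [As <-]] [t [At <-]].
        case: (totA s t As At) => /asboolP H; [right|left]; exact: H.
    exists (exist _ _ PC) => s As; apply/asboolP => x /= Hx.
    by apply: Hx; exists s.
  + exists (exist _ X0 PX0) => s As; exfalso; apply: nA; by exists s.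
- move=> t tmax; exists (proj1_sig t); split; first exact: (proj2_sig t).
  move=> Y PY YX.
  have := tmax (exist _ Y PY).
  have h : R t (exist _ Y PY) by apply/asboolP.
  by move=> /(_ h) /asboolP.
Qed.
End ZornW.

Lemma ret_chain {M : Type} (d : M -> M -> R) :
  is_metric d -> metric_normal_structure d -> admissible_compact d ->
  forall (A0 : M -> Prop) (C : (M -> Prop) -> Prop), closedc d A0 ->
  (exists E, C E) -> chain C -> (forall E, C E -> Ret d A0 E) ->
  Ret d A0 (fun x => forall E, C E -> E x).
Proof.
  intros Hm Hn Hk A0 C HA0 [E0 CE0] hc hR.
  pose proof Hm as [dpos [dzero [dsym dtri]]].
  split. { intros x Hx. apply (proj1 (hR E0 CE0)). apply Hx; auto. }
  intros G bfG cG [x0 [A0x0 Gx0]].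
  set (K := fun W : M -> Prop => closedc d W /\ subs W A0 /\ subs W (inter_balls d G) /\
    forall E, C E -> (exists y, W y /\ E y) /\ exists H, ball_family H /\
      (forall c r, H c r -> E c) /\ forall y, E y -> (W y <-> inter_balls d H y)).
  assert (K0 : K (fun y => A0 y /\ inter_balls d G y)).
  { split. { apply closedc_inter; auto. apply closedc_balls; auto. }
    split. { intros y [h _]; auto. }
    split. { intros y [_ h]; auto. }
    intros E CE. split.
    - destruct (proj2 (hR E CE) G bfG) as [e [Ee Ge]].
      + intros c r Gcr; apply (cG c r Gcr E CE).
      + exists x0; auto.
      + exists e; split; auto. split; auto. apply (proj1 (hR E CE)); auto.
    - exists G. split; auto. split. { intros c r Gcr; apply (cG c r Gcr E CE). }
      intros y Ey; split. { intros [_ h]; auto. }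
      intros h; split; auto. apply (proj1 (hR E CE)); auto. }
  destruct (ZornW.zorn_min K _ K0) as [W [KW Wmin]].
  { intros CW hCW [W1 CW1] hcW.
    split. { apply closedc_big; intros A hA; apply (hCW A hA). }
    split. { intros y hy; apply (proj1 (proj2 (hCW W1 CW1))); apply hy; auto. }
    split. { intros y hy; apply (proj1 (proj2 (proj2 (hCW W1 CW1)))); apply hy; auto. }
    intros E CE.
    assert (hH : forall y, E y -> ((forall A, CW A -> A y) <->
       inter_balls d (fun c r => exists A, CW A /\ hullf d E (fun z => A z /\ E z) c r) y)).
    { intros y Ey; split.
      - intros hy c r [A [CA hA]]. exact (in_hull d E (fun z => A z /\ E z) y (conj (hy A CA) Ey) c r hA).
      - intros hy A CA. destruct (hCW A CA) as [_ [_ [_ hA]]].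
        destruct (hA E CE) as [_ [H [bfH [cH HH]]]].
        apply (HH y Ey). apply (hull_sub d E (fun z => A z /\ E z) H bfH cH).
        + intros z [Az Ez]; apply (HH z Ez); auto.
        + intros c r hcr; apply hy; exists A; auto. }
    split.
    - destruct (compact_chain d CW (fun A => fun y => A0 y /\
          inter_balls d (hullf d E (fun z => A z /\ E z)) y) Hk (ex_intro _ W1 CW1) hcW)
        as [q Hq].
      + intros A _. apply closedc_inter; auto. apply closedc_balls, hullf_bf.
      + intros S0 CS0. destruct (hCW S0 CS0) as [_ [hS0A [_ hS0]]].
        destruct (hS0 E CE) as [[p [S0p Ep]] _].
        exists p. intros S CS hsub. split. { apply hS0A; auto. }
        apply in_hull. split; auto.
      + destruct (proj2 (hR E CE) (fun c r => exists A, CW A /\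
             hullf d E (fun z => A z /\ E z) c r)) as [e [Ee He]].
        * intros c r [A [_ h]]. apply (hullf_bf d E _ c r h).
        * intros c r [A [_ [h _]]]; auto.
        * exists q. split. { apply (proj1 (Hq W1 CW1)). }
          intros c r [A [CA h]]. apply (proj2 (Hq A CA)); auto.
        * exists e. split; auto. apply (proj2 (hH e Ee)); auto.
    - exists (fun c r => exists A, CW A /\ hullf d E (fun z => A z /\ E z) c r).
      split. { intros c r [A [_ h]]. apply (hullf_bf d E _ c r h). }
      split. { intros c r [A [_ [h _]]]; auto. }
      exact hH. }
  destruct KW as [clW [WA0 [WG WE]]].
  assert (S1 : forall E, C E -> forall y, W y ->
            inter_balls d (hullf d E (fun z => W z /\ E z)) y).
  { intros E CE.
    set (Y := fun y => W y /\ inter_balls d (hullf d E (fun z => W z /\ E z)) y).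
    assert (KY : K Y).
    { split. { apply closedc_inter; auto. apply closedc_balls, hullf_bf. }
      split. { intros z [h _]; auto. }
      split. { intros z [h _]; auto. }
      intros E' CE'. destruct (WE E' CE') as [[p [Wp E'p]] [H [bfH [cH HH]]]].
      destruct (hc E' E CE' CE) as [h|h].
      - split. { exists p; split; auto. split; auto. apply in_hull; auto. }
        exists H; split; auto; split; auto.
        intros y E'y; split.
        + intros [Wy _]; apply HH; auto.
        + intros hy. assert (Wy : W y) by (apply HH; auto). split; auto.
          apply in_hull. split; auto.
      - destruct (WE E CE) as [[p2 [Wp2 Ep2]] _].
        split. { exists p2; split; [split; auto; apply in_hull; auto|apply h; auto]. }
        exists (funion H (hullf d E (fun z => W z /\ E z))).
        split. { apply funion_bf; auto. apply hullf_bf. }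
        split. { intros c r [hh|hh]. { apply cH in hh; auto. } destruct hh as [Ec _]; apply h; auto. }
        intros y E'y. rewrite funion_iff. split.
        + intros [Wy hy]; split; auto; apply HH; auto.
        + intros [h1 h2]; split; auto; apply HH; auto. }
    intros y Wy. exact (proj2 (Wmin Y KY (fun x h => proj1 h) y Wy)). }
  assert (one : forall x y, W x -> W y -> x = y).
  { intros x y Wx Wy. apply NNPP; intro hxy.
    destruct (ns_get d Hm Hn W clW (ex_intro _ x (ex_intro _ y (conj Wx (conj Wy hxy)))))
      as [z [r [Wz [Hz [x1 [y1 [Wx1 [Wy1 Hr]]]]]]]].
    assert (r0 : 0 <= r).
    { specialize (Hz z Wz). rewrite (proj2 (dzero z z) eq_refl) in Hz. exact Hz. }
    set (Y := fun y => W y /\ inter_balls d (fun c s => W c /\ s = r) y).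
    assert (KY : K Y).
    { split. { apply closedc_inter; auto. apply closedc_balls. intros c s [_ ->]; auto. }
      split. { intros z0 [h _]; auto. }
      split. { intros z0 [h _]; auto. }
      intros E CE. destruct (WE E CE) as [_ [H [bfH [cH HH]]]].
      set (U := funion H (fun c s => (W c /\ E c) /\ s = r)).
      assert (bfU : ball_family U).
      { apply funion_bf; auto. intros c s [_ ->]; auto. }
      assert (cU : forall c s, U c s -> E c).
      { intros c s [hh|[[_ hh] _]]; eauto. }
      assert (key : forall y, E y -> (Y y <-> inter_balls d U y)).
      { intros y0 Ey0. unfold Y, U. rewrite funion_iff. split.
        - intros [Wy0 hy]. split. { apply HH; auto. }
          intros c s [[Wc _] ->]. apply hy; auto.
        - intros [hH hr]. assert (Wy0 : W y0) by (apply HH; auto). split; auto.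
          intros w s [Ww ->]. unfold cball.
          assert (hw := S1 E CE w Ww y0 r).
          rewrite dsym. apply hw. split; auto. split; auto.
          intros s0 [Ws0 Es0]. rewrite dsym. apply (hr s0 r). split; auto. }
      split.
      - destruct (proj2 (hR E CE) U bfU cU) as [e [Ee He]].
        + exists z. split. { apply WA0; auto. } apply funion_iff. split.
          * apply (hull_sub d E (fun z0 => W z0 /\ E z0) H bfH cH).
            { intros y0 [Wy0 Ey0]; apply HH; auto. }
            apply S1; auto.
          * intros c s [[Wc _] ->]. unfold cball. rewrite dsym. apply Hz; auto.
        + exists e. split; auto. apply (proj2 (key e Ee) He).
      - exists U. auto. }
    assert (hh := proj2 (Wmin Y KY (fun x h => proj1 h) x1 Wx1) y1 r (conj Wy1 eq_refl)).
    unfold cball in hh. rewrite dsym in hh. lra. }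
  destruct (WE E0 CE0) as [[w [Ww _]] _].
  exists w. split.
  - intros E CE. destruct (WE E CE) as [[y [Wy Ey]] _]. rewrite (one w y Ww Wy); auto.
  - apply WG; auto.
Qed.
Set Bullet Behavior "Strict Subproofs".

Lemma sm_fix {M : Type} (d : M -> M -> R) :
  is_metric d -> metric_normal_structure d -> admissible_compact d ->
  forall (A0 E : M -> Prop) (T : M -> M), closedc d A0 -> Ret d A0 E ->
  orbit_nonexpansive d T -> (forall y, E y -> E (T y)) -> (exists e, E e) ->
  exists e, E e /\ T e = e.
Proof.
  intros Hm Hn Hk A0 E T HA0 [EA0 hRet] HT hinv [e0 Ee0].
  pose proof Hm as [dpos [dzero [dsym dtri]]].
  set (K := fun S : M -> Prop => (exists y, S y) /\
     (exists H, ball_family H /\ (forall c r, H c r -> E c) /\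
        forall y, S y <-> (E y /\ inter_balls d H y)) /\
     forall y, S y -> S (T y)).
  assert (K0 : K E).
  { split. { exists e0; auto. }
    split.
    - exists (fun _ _ => False). split. { intros c r []. }
      split. { intros c r []. }
      intros y; split.
      + intros Ey; split; auto. intros c r [].
      + intros [h _]; auto.
    - exact hinv. }
  destruct (ZornW.zorn_min K _ K0) as [S [KS Smin]].
  { intros CS hCS [S1 CS1] hcS.
    set (U := fun c r => exists S, CS S /\ hullf d E S c r).
    assert (hE : forall y, (forall S, CS S -> S y) <-> E y /\ inter_balls d U y).
    { intros y; split.
      - intros hy. split.
        + destruct (hCS S1 CS1) as [_ [[H1 [bf1 [c1 HH1]]] _]].
          exact (proj1 (proj1 (HH1 y) (hy S1 CS1))).
        + intros c r [S2 [CS2 h]]. exact (in_hull d E S2 y (hy S2 CS2) c r h).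
      - intros [Ey hU] S2 CS2. destruct (hCS S2 CS2) as [_ [[H [bfH [cH HH]]] _]].
        apply HH. split; auto. apply (hull_sub d E S2 H bfH cH).
        + intros z Sz. exact (proj2 (proj1 (HH z) Sz)).
        + intros c r h; apply hU; exists S2; auto. }
    split.
    - destruct (compact_chain d CS (fun S => fun y => A0 y /\ inter_balls d (hullf d E S) y)
         Hk (ex_intro _ S1 CS1) hcS) as [q Hq].
      + intros S' _. apply closedc_inter; auto. apply closedc_balls, hullf_bf.
      + intros S0 CS0. destruct (hCS S0 CS0) as [[p S0p] [[H [bfH [cH HH]]] _]].
        exists p. intros S' CS' hsub. split.
        * apply EA0. exact (proj1 (proj1 (HH p) S0p)).
        * apply in_hull. apply hsub; auto.
      + destruct (hRet U) as [e [Ee He]].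
        * intros c r [S' [_ h]]. exact (hullf_bf d E S' c r h).
        * intros c r [S' [_ [h _]]]; auto.
        * exists q. split. { exact (proj1 (Hq S1 CS1)). }
          intros c r [S' [CS' h]]. exact (proj2 (Hq S' CS') c r h).
        * exists e. apply (proj2 (hE e)). auto.
    - split.
      + exists U. split. { intros c r [S' [_ h]]. exact (hullf_bf d E S' c r h). }
        split. { intros c r [S' [_ [h _]]]; auto. }
        exact hE.
      + intros y hy S' CS'. exact (proj2 (proj2 (hCS S' CS')) y (hy S' CS')). }
  destruct KS as [[s0 Ss0] [[H [bfH [cH HH]]] Sinv]].
  assert (SE : forall y, S y -> E y). { intros y Sy. exact (proj1 (proj1 (HH y) Sy)). }
  assert (sa : forall x r, S x -> 0 <= r -> (forall y, S y -> d (T x) (T y) <= r) ->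
                 forall y, S y -> d (T x) y <= r).
  { intros x r Sx r0 hx.
    set (Y := fun y => S y /\ d (T x) y <= r).
    assert (KY : K Y).
    { split. { exists (T x). split; [auto|]. rewrite (proj2 (dzero _ _) eq_refl); auto. }
      split.
      - exists (funion H (fun c s => c = T x /\ s = r)).
        split. { apply funion_bf; auto. intros c s [_ ->]; auto. }
        split. { intros c s [h|[-> _]]; eauto. }
        intros y; rewrite funion_iff; split.
        + intros [Sy hy]. split; [apply SE; auto|]. split.
          * exact (proj2 (proj1 (HH y) Sy)).
          * intros c s [-> ->]. exact hy.
        + intros [Ey [hH hb]]. split.
          * apply HH; auto.
          * exact (hb (T x) r (conj eq_refl eq_refl)).
      - intros y [Sy hy]. split; auto. }
    intros y Sy. exact (proj2 (Smin Y KY (fun _ h => proj1 h) y Sy)). }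
  assert (one : forall x y, S x -> S y -> x = y).
  { intros x y Sx Sy. apply NNPP; intro hxy.
    set (X := fun y => A0 y /\ (fun y => inter_balls d H y /\ cov d S y) y).
    assert (clX : closedc d X).
    { apply closedc_inter; auto. apply closedc_inter; apply closedc_balls; auto.
      intros c r [h _]; auto. }
    assert (SX : forall y, S y -> X y).
    { intros y0 Sy0. split. { apply EA0, SE; auto. } split.
      - exact (proj2 (proj1 (HH y0) Sy0)).
      - intros c r [_ h]; apply h; auto. }
    destruct (ns_get d Hm Hn X clX (ex_intro _ x (ex_intro _ y (conj (SX x Sx) (conj (SX y Sy) hxy)))))
      as [z [r [Xz [Hz [x2 [y2 [Xx2 [Xy2 Hr]]]]]]]].
    assert (r0 : 0 <= r).
    { specialize (Hz z Xz). rewrite (proj2 (dzero z z) eq_refl) in Hz. exact Hz. }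
    set (Cs := fun y => S y /\ inter_balls d (fun c s => S c /\ s = r) y).
    set (U := funion H (fun c s => S c /\ s = r)).
    assert (bfU : ball_family U). { apply funion_bf; auto. intros c s [_ ->]; auto. }
    assert (cU : forall c s, U c s -> E c). { intros c s [h|[h _]]; eauto. }
    assert (KC : K Cs).
    { split.
      - destruct (hRet U bfU cU) as [e [Ee He]].
        + exists z. split. { exact (proj1 Xz). } apply funion_iff. split.
          * exact (proj1 (proj2 Xz)).
          * intros c s [Sc ->]. unfold cball. rewrite dsym. apply Hz, SX; auto.
        + apply funion_iff in He. destruct He as [h1 h2]. exists e. split; auto.
          apply HH; auto.
      - split.
        + exists U. split; auto. split; auto. intros y0. unfold Cs, U. rewrite funion_iff.
          split.
          * intros [Sy0 h]. split; [apply SE; auto|]. split; auto.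
            exact (proj2 (proj1 (HH y0) Sy0)).
          * intros [Ey0 [h1 h2]]. split; auto. apply HH; auto.
        + intros y0 [Sy0 hy0]. split; [apply Sinv; auto|].
          intros c s [Sc ->]. unfold cball. rewrite dsym.
          apply (sa y0 r Sy0 r0); auto.
          intros w Sw. apply on_le; auto. intros z' hz'.
          assert (Sz' : S z') by (apply (orbit_inv T S Sinv w z'); auto).
          rewrite dsym. exact (hy0 z' r (conj Sz' eq_refl)). }
    assert (SC := Smin Cs KC (fun _ h => proj1 h)).
    assert (hh : d x2 y2 <= r).
    { apply (proj2 (proj2 Xy2)). split; auto. intros a Sa.
      rewrite dsym. apply (proj2 (proj2 Xx2)). split; auto.
      intros b Sb. exact (proj2 (SC b Sb) a r (conj Sa eq_refl)). }
    lra. }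
  exists s0. split; [apply SE; auto|]. symmetry. apply one; auto.
Qed.

Lemma sm_ret {M : Type} (d : M -> M -> R) :
  is_metric d -> metric_normal_structure d -> admissible_compact d ->
  forall (A0 E : M -> Prop) (T : M -> M), closedc d A0 -> Ret d A0 E ->
  orbit_nonexpansive d T -> (forall y, E y -> E (T y)) ->
  Ret d A0 (fun x => E x /\ T x = x).
Proof.
  intros Hm Hn Hk A0 E T HA0 [EA0 hRet] HT hinv.
  pose proof Hm as [dpos [dzero [dsym dtri]]].
  split. { intros x [Ex _]; apply EA0; auto. }
  intros G bfG cG [x0 [A0x0 Gx0]].
  set (A1 := fun y => A0 y /\ inter_balls d G y).
  set (E1 := fun y => E y /\ inter_balls d G y).
  assert (R1 : Ret d A1 E1).
  { split. { intros y [Ey Gy]; split; auto. }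
    intros H bfH cH [x1 [[A0x1 Gx1] Hx1]].
    destruct (hRet (funion H G)) as [e [Ee He]].
    - apply funion_bf; auto.
    - intros c r [h|h]. { exact (proj1 (cH c r h)). } exact (proj1 (cG c r h)).
    - exists x1. split; auto. apply funion_iff; auto.
    - apply funion_iff in He. destruct He as [h1 h2]. exists e. split; auto. split; auto. }
  assert (inv1 : forall y, E1 y -> E1 (T y)).
  { intros y [Ey Gy]. split; auto. intros c r Gcr.
    destruct (cG c r Gcr) as [Ec Tc]. unfold cball.
    replace (d c (T y)) with (d (T y) (T c)) by (rewrite Tc; apply dsym).
    apply on_le; auto. intros z hz. rewrite (orbit_fix T c z Tc hz). rewrite dsym.
    apply Gy; auto. }
  destruct (Ret_nonempty d A1 E1 R1) as [e1 He1]. { exists x0; split; auto. }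
  assert (cl1 : closedc d A1).
  { apply closedc_inter; auto. apply closedc_balls; auto. }
  destruct (sm_fix d Hm Hn Hk A1 E1 T cl1 R1 HT inv1 (ex_intro _ e1 He1)) as [e [[Ee Ge] Te]].
  exists e. split; auto.
Qed.

Theorem corollary3p8 (M : Type) (d : M -> M -> R) (I : Type) (T : I -> M -> M) :
  inhabited M ->
  is_metric d ->
  bounded_metric d ->
  metric_normal_structure d ->
  admissible_compact d ->
  (forall i, orbit_nonexpansive d (T i)) ->
  (forall i j x, T i (T j x) = T j (T i x)) ->
  (exists x, forall i, T i x = x) /\
  one_local_retract d (fun x => forall i, T i x = x).
Proof.
  intros hinh Hm Hb Hn Hk HT Hcomm.
  pose proof Hm as [dpos [dzero [dsym dtri]]].
  assert (ret : one_local_retract d (fun x => forall i, T i x = x)).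
  { intros B bfB cB [x0 Bx0].
    set (A0 := inter_balls d B).
    assert (HA0 : closedc d A0) by (apply closedc_balls; auto).
    assert (invA : forall i y, A0 y -> A0 (T i y)).
    { intros i y Ay c r Bcr. unfold cball.
      assert (Tc := cB c r Bcr i).
      replace (d c (T i y)) with (d (T i y) (T i c)) by (rewrite Tc; apply dsym).
      apply on_le; auto. intros z hz. rewrite (orbit_fix (T i) c z Tc hz). rewrite dsym.
      apply Ay; auto. }
    set (K := fun E : M -> Prop => Ret d A0 E /\ forall i y, E y -> E (T i y)).
    assert (K0 : K A0).
    { split; auto. split. { intros y h; exact h. }
      intros G _ _ [x [Ax Gx]]. exists x; auto. }
    destruct (ZornW.zorn_min K _ K0) as [E [KE Emin]].
    { intros CE hC hne hc. split.
      - apply ret_chain; auto. intros E hE; exact (proj1 (hC E hE)).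
      - intros i y hy E' CE'. exact (proj2 (hC E' CE') i y (hy E' CE')). }
    assert (allfix : forall i y, E y -> T i y = y).
    { intros i.
      set (F := fun y => E y /\ T i y = y).
      assert (KF : K F).
      { split.
        - apply sm_ret; auto. exact (proj1 KE). intros y Ey; apply (proj2 KE); auto.
        - intros j y [Ey Ty]. split. { apply (proj2 KE); auto. }
          rewrite Hcomm, Ty; reflexivity. }
      intros y Ey. exact (proj2 (Emin F KF (fun _ h => proj1 h) y Ey)). }
    destruct (Ret_nonempty d A0 E (proj1 KE)) as [e Ee]. { exists x0; auto. }
    exists e. split.
    - intros i; apply allfix; auto.
    - apply (proj1 (proj1 KE)); auto. }
  split; auto.
  destruct hinh as [m].
  destruct (ret (fun _ _ => False)) as [e [He _]].
  - intros c r [].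
  - intros c r [].
  - exists m. intros c r [].
  - exists e; auto.
Qed.
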